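(* With $Y^+$ as in the context, there is an isomorphism of $\mathbb{Z}$-modules $\mathrm{BF}(Y^+)\cong\mathbb{Z}^{\frac{p-3}{2}}\oplus\mathbb{Z}/p\mathbb{Z}$.
   Context: Let $p$ be an odd prime, $\Delta=\mathrm{Gal}(\mathbb{Q}(\zeta_p)/\mathbb{Q})$, $\sigma_i:\zeta_p\mapsto\zeta_p^i$, $j=\sigma_{-1}$. Digraphs have incidence $e\mapsto(o(e),t(e))$; the derived digraph $X(G,\alpha)$ of $\alpha:E_X\to G$ has vertices $V_X\times G$, edges $E_X\times G$, $o(e,\sigma)=(o(e),\sigma)$, $t(e,\sigma)=(t(e),\sigma\alpha(e))$, with $G$ acting by left multiplication on the second coordinate. $X$ is the bouquet with $\frac{p-1}{2}p+1$ loops $e_0$, $e_{i,k}$ ($1\le k\le i\le p-1$), $\alpha(e_0)=\sigma_1$, $\alpha(e_{i,k})=\sigma_i^{-1}$, $Y=X(\Delta,\alpha)$, and $Y^+=Y_{\langle j\rangle}$ is the quotient digraph by $\langle j\rangle$. For a finite digraph $W$, $\mathcal{A}_W(w)=\sum_{o(\varepsilon)=w}t(\varepsilon)$ on $\mathbb{Z}V_W$ and $\mathrm{BF}(W)=\mathrm{coker}(\mathcal{I}-\mathcal{A}_W)$. *)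

(* Defs.v *)
From HB Require Import structures.
From mathcomp Require Import all_boot all_order all_algebra all_fingroup.

Set Implicit Arguments.
Unset Strict Implicit.
Unset Printing Implicit Defensive.

Import GRing.Theory.

Record digraph := Digraph {
  vtx : finType;
  edg : finType;
  dorg : edg -> vtx;
  dter : edg -> vtx }.

Definition derived (X : digraph) (G : finGroupType) (alpha : edg X -> G)
  : digraph :=
  @Digraph (vtx X * G)%type (edg X * G)%type
    (fun e => (dorg e.1, e.2))
    (fun e => (dter e.1, (e.2 * alpha e.1)%g)).

Definition lorb (T : finType) (G : finGroupType) (H : {set G}) (x : T * G)
  : {set T * G} := [set (x.1, (h * x.2)%g) | h in H].

Definition orbT (T : finType) (G : finGroupType) (H : {set G}) :=
  {A : {set T * G} | A \in codom (lorb H)}.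

Definition orbq (T : finType) (G : finGroupType) (H : {set G}) (x : T * G)
  : orbT T H := exist _ (lorb H x) (codom_f (lorb H) x).

Definition orbrep (T : finType) (G : finGroupType) (H : {set G})
  (A : orbT T H) : T * G := iinv (valP A).

(* Quotient digraph Y_H of Y = X(G, alpha) by H acting on the left:
   vertices = H-orbits of vertices, edges = H-orbits of edges,
   o([e]) = [o(e)], t([e]) = [t(e)] (well defined since G acts by
   digraph automorphisms). *)
Definition derived_quot (X : digraph) (G : finGroupType) (alpha : edg X -> G)
  (H : {set G}) : digraph :=
  @Digraph (orbT (vtx X) H) (orbT (edg X) H)
    (fun E => orbq H (@dorg (derived alpha) (orbrep E)))
    (fun E => orbq H (@dter (derived alpha) (orbrep E))).

Local Open Scope ring_scope.

(* Z V_W = {ffun vtx W -> int}; A_W is the linear extension of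
   w |-> sum_{o(eps) = w} t(eps). *)
Definition adjop (W : digraph) (f : {ffun vtx W -> int}) : {ffun vtx W -> int} :=
  [ffun u => \sum_(w : vtx W) f w * \sum_(e : edg W | dorg e == w) (dter e == u)%:R].

(* "coker L is isomorphic to Q" as Z-modules, via the first isomorphism
   theorem: there is a surjective Z-module morphism N -> Q whose kernel is
   exactly the image of L. *)
Definition coker_iso (M N Q : zmodType) (L : M -> N) : Prop :=
  exists phi : N -> Q,
    [/\ forall x y, phi (x + y) = phi x + phi y,
        forall z, exists y, phi y = z
      & forall y, phi y = 0 <-> exists x, y = L x].

Definition BF_iso (W : digraph) (Q : zmodType) : Prop :=
  @coker_iso {ffun vtx W -> int} {ffun vtx W -> int} Q (fun f => f - adjop f).

(* Delta = Gal(Q(zeta_p)/Q), identified with (Z/pZ)^x via the cyclotomic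
   character: sigma_i <-> i mod p. *)
Definition Delta (p : nat) : finGroupType := {unit 'Z_p}.

Definition sigma (p i : nat) : Delta p := insubd (1%g : {unit 'Z_p}) (i%:R : 'Z_p).

Definition jconj (p : nat) : Delta p := sigma p p.-1.

(* Edges of the bouquet X: e_0 (None) and e_{i,k}, 1 <= k <= i <= p-1. *)
Definition edgeX (p : nat) : finType :=
  option {ik : 'I_p * 'I_p | (0 < ik.2 <= ik.1)%N}.

Definition bouquetX (p : nat) : digraph :=
  @Digraph unit (edgeX p) (fun _ => tt) (fun _ => tt).

Definition alphaX (p : nat) (e : edg (bouquetX p)) : Delta p :=
  match e with
  | None => sigma p 1
  | Some ik => ((sigma p (val ik).1)^-1)%g
  end.

Definition Y (p : nat) : digraph := derived (@alphaX p).

Definition Yplus (p : nat) : digraph := derived_quot (@alphaX p) <[jconj p]>%g.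

(* Main.v *)
Require Import Defs.
From mathcomp Require Import all_boot all_order all_algebra all_fingroup.
Set Implicit Arguments. Unset Strict Implicit. Unset Printing Implicit Defensive.
Import GRing.Theory.

From mathcomp Require Import zify.
Section Orb.
Variables (T : finType) (G : finGroupType) (H : {group G}).
Implicit Types x y : T * G.

Lemma mem_lorb x y : (y \in lorb H x) = (y.1 == x.1) && (y.2 * x.2^-1 \in H)%g.
Proof.
apply/imsetP/andP => [[h hH ->]|[/eqP e1 e2]] /=.
  by rewrite eqxx mulgK.
exists (y.2 * x.2^-1)%g => //; rewrite mulgKV -e1; by case: y {e1 e2}.
Qed.

Lemma lorb_self x : x \in lorb H x.
Proof. by rewrite mem_lorb eqxx mulgV group1. Qed.

Lemma lorb_eq x y : y \in lorb H x -> lorb H y = lorb H x.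
Proof.
rewrite mem_lorb => /andP[/eqP e1 e2]; apply/setP => z; rewrite !mem_lorb e1.
idtac.
have -> : (z.2 * x.2^-1 = (z.2 * y.2^-1) * (y.2 * x.2^-1))%g by rewrite mulgA mulgKV.
by rewrite (groupMr _ e2).
Qed.

Lemma orbqE x y : (orbq H x == orbq H y) = (x \in lorb H y).
Proof.
apply/eqP/idP => [e|/lorb_eq e]; last by apply: val_inj.
have : lorb H x = lorb H y by move: e => /(congr1 val).
by move=> <-; apply: lorb_self.
Qed.

Lemma orbrepK (A : Defs.orbT T H) : orbq H (orbrep A) = A.
Proof. by apply: val_inj; rewrite /= /orbrep f_iinv. Qed.

Lemma orbrep_in (A : Defs.orbT T H) : orbrep A \in lorb H (orbrep (orbq H (orbrep A))).
Proof. by rewrite orbrepK lorb_self. Qed.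

Lemma orbq_rep x : orbrep (orbq H x) \in lorb H x.
Proof. by rewrite -orbqE orbrepK. Qed.
End Orb.

Lemma cnt n i : i < n -> \sum_(k < n | 0 < k <= i) 1 = i.
Proof.
move=> lt_in.
rewrite (eq_bigl (fun k : 'I_n => (0 < k) && (k < i.+1))) //.
rewrite (big_ord_narrow_cond lt_in) /=.
rewrite big_mkcond big_ord_recl /= add0n.
by rewrite (eq_bigr (fun _ => 1)) // sum1_card card_ord.
Qed.

Lemma sum_sig n (c : nat -> nat) :
  \sum_(x : {ik : 'I_n * 'I_n | 0 < ik.2 <= ik.1}) c (val x).1 = \sum_(i < n) c i * i.
Proof.
have -> : \sum_(x : {ik : 'I_n * 'I_n | 0 < ik.2 <= ik.1}) c (val x).1 =
          \sum_(ik : 'I_n * 'I_n | 0 < ik.2 <= ik.1) c ik.1.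
  rewrite (reindex_omap (val : {ik : 'I_n * 'I_n | 0 < ik.2 <= ik.1} -> _) insub); last first.
    by move=> i Pi; rewrite insubT.
  by apply: eq_bigl => -[i Pi] /=; rewrite Pi insubT /= eqxx.
rewrite -(pair_big_dep xpredT (fun (i k : 'I_n) => 0 < k <= i) (fun (i : 'I_n) _ => c i)) /=.
apply: eq_bigr => i _; rewrite (eq_bigr (fun k => c i * 1)); last by move=> *; rewrite muln1.
by rewrite -bigop.big_distrr /= cnt.
Qed.

Lemma sum_opt (T : finType) (F : option T -> nat) :
  \sum_(x : option T) F x = F None + \sum_(y : T) F (Some y).
Proof.
rewrite (bigD1 None) //=; congr (_ + _).
rewrite (reindex_omap (@Some T) id); last first.
  by case.
by apply: eq_bigl => y /=; rewrite eqxx.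
Qed.

Lemma sum_one n a : a < n -> \sum_(i < n) (i == a :> nat) * i = a.
Proof.
move=> an; rewrite (bigD1 (Ordinal an)) //= eqxx mul1n big1 ?addn0 // => i ne.
have -> : (i == a :> nat) = false.
  by apply/negbTE; apply: contra ne => /eqP e; apply/eqP/val_inj.
by [].
Qed.

Lemma sum_two n a b : a < n -> b < n -> a != b ->
  \sum_(i < n) ((i == a :> nat) || (i == b :> nat)) * i = a + b.
Proof.
move=> an bn ab.
rewrite (eq_bigr (fun i : 'I_n => (i == a :> nat) * i + (i == b :> nat) * i)).
  by rewrite big_split /= !sum_one.
move=> i _; case: (eqVneq (i : nat) a) => [->|_]; last by [].
by rewrite (negbTE ab) /= addn0.
Qed.
Section Grp.
Variable q : nat.
Hypothesis pr : prime q.+3.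
Hypothesis ev : ~~ odd q.
Local Notation p := q.+3.
Local Notation G := (Delta p).
Local Notation j := (jconj p).

Definition kv (g : G) : nat := val (val g).

Lemma kv_inj g h : kv g = kv h -> g = h.
Proof. by move=> e; apply/val_inj/val_inj. Qed.

Lemma kv_lt g : kv g < p.
Proof. exact: ltn_ord. Qed.

Lemma kv_gt0 g : 0 < kv g.
Proof.
rewrite lt0n; apply/negP => /eqP e.
have : val g \is a GRing.unit by exact: valP.
have -> : val g = 0%R by apply: val_inj.
by rewrite unitr0.
Qed.

Lemma kv_sigma i : 0 < i < p -> kv (sigma p i) = i.
Proof.
move=> /andP[i0 ip]; rewrite /kv /sigma insubdK.
  by rewrite Zp_nat /= modn_small.
rewrite unitZpE // prime_coprime //; apply/negP => /dvdn_leq.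
by rewrite i0 leqNgt ip => /(_ isT).
Qed.

Lemma sigma_kv g : sigma p (kv g) = g.
Proof. by apply: kv_inj; rewrite kv_sigma // kv_gt0 kv_lt. Qed.

Lemma kv_mul g h : kv (g * h)%g = (kv g * kv h) %% p.
Proof. by []. Qed.

Lemma kv1 : kv 1%g = 1.
Proof. by []. Qed.

Lemma sigma1 : sigma p 1 = 1%g.
Proof. by apply: kv_inj; rewrite kv_sigma. Qed.

Lemma kv_j : kv j = p.-1.
Proof. by rewrite /jconj kv_sigma //=; lia. Qed.

Lemma kv_jg g : kv (j * g)%g = p - kv g.
Proof.
rewrite kv_mul kv_j.
have g0 := kv_gt0 g; have gp := kv_lt g.
have -> : p.-1 * kv g = (kv g).-1 * p + (p - kv g) by nia.
by rewrite modnMDl modn_small //; lia.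
Qed.

Lemma mulgC_G (g h : G) : (g * h = h * g)%g.
Proof. by apply: kv_inj; rewrite !kv_mul mulnC. Qed.

Lemma jj : (j * j = 1)%g.
Proof. by apply: kv_inj; rewrite kv_jg kv_j kv1; lia. Qed.

Lemma j_neq1 : j != 1%g.
Proof. by apply/eqP => /(congr1 kv); rewrite kv_j kv1. Qed.

Lemma jV : (j^-1 = j)%g.
Proof. by apply/eqP; rewrite eq_invg_mul jj. Qed.

Lemma memH h : (h \in <[j]>%g) = (h == 1%g) || (h == j).
Proof.
apply/idP/orP => [/cycleP[i ->]|[/eqP->|/eqP->]]; last 2 first.
- exact: group1.
- exact: cycle_id.
rewrite -(expg_mod _ (x := j) (p := 2)); last by rewrite expgS expg1 jj.
have : i %% 2 < 2 by rewrite ltn_mod.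
by case: (i %% 2) => [|[|]] // _; [left|right; rewrite expg1].
Qed.


Lemma hq : q = 2 * q./2.
Proof. by rewrite -{1}(odd_double_half q) (negbTE ev) add0n -mul2n. Qed.

Lemma orbqJ (T : finType) (x y : T * G) :
  (orbq <[j]>%g x == orbq <[j]>%g y) = (x \in lorb <[j]>%g y).
Proof. exact: (@orbqE _ _ <[j]>%G). Qed.

Lemma mem_lorbJ (T : finType) (x y : T * G) :
  (y \in lorb <[j]>%g x) = (y.1 == x.1) && (y.2 * x.2^-1 \in <[j]>%g)%g.
Proof. exact: (@mem_lorb _ _ <[j]>%G). Qed.

Lemma orbq_repJ (T : finType) (x : T * G) : orbrep (orbq <[j]>%g x) \in lorb <[j]>%g x.
Proof. exact: (@orbq_rep _ _ <[j]>%G). Qed.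

Lemma orbqV (g h : G) :
  (orbq <[j]>%g (tt, g) == orbq <[j]>%g (tt, h)) = (g == h) || (g == j * h)%g.
Proof.
rewrite orbqJ mem_lorb /= memH -eq_mulgV1.
congr (_ || _); apply/eqP/eqP => [<-|->]; [by rewrite mulgKV | by rewrite mulgK].
Qed.

Lemma vtx_rep (w : vtx (Yplus p)) : w = orbq <[j]>%g (tt, (orbrep w).2).
Proof. by rewrite -[in LHS](orbrepK w); case: (orbrep w) => [[] g]. Qed.

Lemma eq_mulV (s x t : G) : (s * x^-1 == t)%g = (x == t^-1 * s)%g.
Proof.
apply/eqP/eqP => [<-|->]; first by rewrite invMg invgK mulgKV.
by rewrite invMg invgK mulKVg.
Qed.

Lemma count_edges (w u : vtx (Yplus p)) :
  \sum_(E : edg (Yplus p) | dorg E == w) (dter E == u) = (w == u) + p.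
Proof.
set s := (orbrep w).2.
have wE := vtx_rep w; rewrite -/s in wE.
pose eps (e : edgeX p) : edg (Yplus p) := orbq <[j]>%g (e, s).
have epsP e : exists2 h, h \in <[j]>%g & orbrep (eps e) = (e, h * s)%g.
  have := orbq_repJ (e, s); rewrite mem_lorbJ => /andP[/eqP e1 e2].
  exists ((orbrep (eps e)).2 * s^-1)%g => //.
  rewrite mulgKV; move: e1; change ((orbrep (eps e)).1 = e -> orbrep (eps e) = (e, (orbrep (eps e)).2)).
  by case: (orbrep (eps e)) => a b /= ->.
have dorg_eps e : dorg (eps e) = w.
  case: (epsP e) => h hH re; rewrite wE; apply/eqP.
  change (orbq <[j]>%g (tt, (orbrep (eps e)).2) == orbq <[j]>%g (tt, s)).
  rewrite re orbqV /=.
  by rewrite memH in hH; case/orP: hH => /eqP->; rewrite ?mul1g eqxx ?orbT.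
have dter_eps e : dter (eps e) = orbq <[j]>%g (tt, s * alphaX e)%g.
  case: (epsP e) => h hH re; apply/eqP.
  change (orbq <[j]>%g (tt, (orbrep (eps e)).2 * alphaX (orbrep (eps e)).1)%g == orbq <[j]>%g (tt, s * alphaX e)%g).
  rewrite re /= orbqJ mem_lorbJ /=.
  by rewrite invMg mulgA mulgK mulgK.
have eps_inj : injective eps.
  move=> e1 e2 /eqP; rewrite /eps orbqJ mem_lorbJ /=.
  by case/andP => /eqP.
rewrite (eq_bigl (mem (eps @: [set: edgeX p]))); last first.
  move=> E /=; apply/eqP/imsetP => [dE|[e _ ->]]; last exact: dorg_eps.
  exists (orbrep E).1; first by rewrite inE.
  rewrite -[E in LHS]orbrepK; apply/eqP.
  rewrite orbqJ mem_lorbJ /= eqxx /=.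
  move: dE; rewrite wE => /eqP.
  change (orbq <[j]>%g (tt, (orbrep E).2) == orbq <[j]>%g (tt, s) -> (orbrep E).2 * s^-1 \in <[j]>%g)%g.
  by rewrite orbqJ mem_lorbJ => /andP[].
rewrite big_imset /=; last by move=> x y _ _; apply: eps_inj.
rewrite (eq_bigl xpredT); last by move=> e; rewrite inE.
rewrite (eq_bigr (fun e : edgeX p => nat_of_bool (orbq <[j]>%g (tt, s * alphaX e)%g == u))); last first.
  by move=> e _; rewrite -(dter_eps e).
rewrite sum_opt /= sigma1 mulg1 -wE; congr (_ + _).
pose c i := nat_of_bool (orbq <[j]>%g (tt, s * (sigma p i)^-1)%g == u).
transitivity (\sum_(i < p) c i * i); first by rewrite -sum_sig; apply: eq_bigr.
set t := (orbrep u).2.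
have uE := vtx_rep u; rewrite -/t in uE.
set a := kv (t^-1 * s)%g.
have a0 : 0 < a by apply: kv_gt0.
have ap : a < p by apply: kv_lt.
rewrite (eq_bigr (fun i : 'I_p => ((i == a :> nat) || (i == p - a :> nat)) * i)).
  rewrite sum_two; first by rewrite subnKC // ltnW.
  - by [].
  - lia.
  - apply/eqP => e; have := hq; lia.
move=> i _; case: (posnP i) => [->|i0]; first by rewrite !muln0.
congr (nat_of_bool _ * _).
have ip := ltn_ord i.
rewrite uE orbqV !eq_mulV.
congr (_ || _).
  apply/eqP/eqP => [e|e]; first by rewrite /a -e kv_sigma ?i0 ?ip.
  by apply: kv_inj; rewrite kv_sigma ?i0 ?ip // e.
have -> : ((j * t)^-1 * s = j * (t^-1 * s))%g.
  by rewrite invMg jV (mulgC_G t^-1) -mulgA.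
apply/eqP/eqP => [e|e]; first by rewrite /a -kv_jg -e kv_sigma ?i0 ?ip.
by apply: kv_inj; rewrite kv_sigma ?i0 ?ip // e kv_jg.
Qed.


Local Open Scope ring_scope.

Lemma L_formula (f : {ffun vtx (Yplus p) -> int}) :
  f - adjop f = [ffun _ => - (p%:R * \sum_w f w)].
Proof.
apply/ffunP => u; rewrite !ffunE.
rewrite (eq_bigr (fun w => f w * ((w == u)%:R + p%:R))); last first.
  by move=> w _; rewrite -natr_sum count_edges natrD.
rewrite (eq_bigr (fun w => f w * (w == u)%:R + f w * p%:R)); last first.
  by move=> w _; rewrite mulrDr.
rewrite big_split /= -big_distrl /=.
rewrite (bigD1 u) //= eqxx mulr1 big1 ?addr0; last first.
  by move=> w /negbTE ->; rewrite mulr0.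
by rewrite opprD addrA subrr add0r mulrC.
Qed.

Lemma intZp0 (z : int) : (z%:~R : 'Z_p) = 0 -> (p %| z)%Z.
Proof.
have [n hn] : exists n : nat, (z %% p)%Z = n%:Z.
  by exists (absz (z %% p)%Z); rewrite gez0_abs // modz_ge0.
have np : (n < p)%N.
  by have := @ltz_pmod z p isT; rewrite hn ltz_nat.
rewrite {1}(divz_eq z p) intrD intrM hn.
have -> : ((p%:Z)%:~R : 'Z_p) = 0 by rewrite -pmulrn pchar_Zp.
rewrite mulr0 add0r -pmulrn => /(congr1 val).
rewrite Zp_nat /= modn_small // => n0.
by apply/dvdz_mod0P; rewrite hn n0.
Qed.

Definition m := q./2.
Definition v0 : vtx (Yplus p) := orbq <[j]>%g (tt, sigma p 1).
Definition vk (k : 'I_m) : vtx (Yplus p) := orbq <[j]>%g (tt, sigma p k.+2).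

Lemma vert_surj (v : vtx (Yplus p)) :
  exists2 c, (0 < c <= m.+1)%N & v = orbq <[j]>%g (tt, sigma p c).
Proof.
have vE := vtx_rep v; set g := (orbrep v).2 in vE.
have g0 := kv_gt0 g; have gp := kv_lt g; have e := hq.
case: (leqP (kv g) m.+1) => h.
  by exists (kv g); [rewrite g0 h | rewrite vE sigma_kv].
exists (p - kv g)%N; first by rewrite /m in h *; apply/andP; split; lia.
rewrite vE; apply/eqP; rewrite orbqV; apply/orP; right.
apply/eqP; apply: kv_inj; rewrite kv_jg kv_sigma; first by lia.
by rewrite /m in h; apply/andP; split; lia.
Qed.

Lemma vert_inj a b : (0 < a <= m.+1)%N -> (0 < b <= m.+1)%N ->
  orbq <[j]>%g (tt, sigma p a) = orbq <[j]>%g (tt, sigma p b) -> a = b.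
Proof.
rewrite /m => /andP[a0 am] /andP[b0 bm] /eqP; rewrite orbqV.
have e := hq.
have ha : (0 < a < p)%N by apply/andP; split; lia.
have hb : (0 < b < p)%N by apply/andP; split; lia.
case/orP => /eqP /(congr1 kv); rewrite ?kv_jg !kv_sigma //; lia.
Qed.

Definition phi (f : {ffun vtx (Yplus p) -> int}) : 'rV[int]_m * 'Z_p :=
  (\row_(k < m) (f (vk k) - f v0), (f v0)%:~R).

Lemma vk_neq0 k : vk k <> v0.
Proof.
move=> e; have kl := ltn_ord k.
have r1 : (0 < k.+2 <= m.+1)%N by apply/andP; split => //.
have r0 : (0 < 1 <= m.+1)%N by [].
by have := vert_inj r1 r0 e.
Qed.

Lemma vk_inj : injective vk.
Proof.
move=> k k' e; have h1 := ltn_ord k; have h2 := ltn_ord k'.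
have r1 : (0 < k.+2 <= m.+1)%N by apply/andP; split => //.
have r2 : (0 < k'.+2 <= m.+1)%N by apply/andP; split => //.
by case: (vert_inj r1 r2 e) => e'; apply: val_inj.
Qed.

Lemma main_q : BF_iso (Yplus p) ('rV[int]_((p - 3)./2) * 'Z_p)%type.
Proof.
have -> : ((p - 3)./2)%N = m by rewrite /m !subSS subn0.
exists phi; split.
- move=> x y; apply: injective_projections => /=.
    by apply/matrixP => i k; rewrite !mxE !ffunE addrACA opprD.
  by rewrite ffunE intrD.
- case=> r z.
  pose c : int := (z : nat)%:Z.
  pose f := [ffun v => if [pick k | vk k == v] is Some k then r ord0 k + c else c].
  have f0 : f v0 = c.
    rewrite ffunE; case: pickP => [k /eqP e|] //; by have := vk_neq0 e.
  have fk k : f (vk k) = r ord0 k + c.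
    rewrite ffunE; case: pickP => [k' /eqP /vk_inj -> //|/(_ k)].
    by rewrite eqxx.
  exists f; apply: injective_projections => /=.
    by apply/matrixP => i k; rewrite mxE fk f0 addrK (ord1 i).
  by rewrite f0 /c -pmulrn natr_Zp.
- move=> y; split.
    move=> H0.
    have h1 k : y (vk k) = y v0.
      have := congr1 (fun M : ('rV[int]_m * 'Z_p)%type => M.1 ord0 k) H0; rewrite /= !mxE.
      exact: subr0_eq.
    have h2 : ((y v0)%:~R : 'Z_p) = 0 by have := congr1 snd H0.
    case/dvdzP: (intZp0 h2) => K hK.
    exists [ffun v => if v == v0 then - K else 0].
    apply/ffunP => v; rewrite L_formula ffunE.
    rewrite (bigD1 v0) //= big1 ?ffunE ?eqxx; last first.
      by move=> w /negbTE; rewrite ffunE => ->.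
    have -> : y v = y v0.
      case: (vert_surj v) => cc /andP[c0 cm] ->.
      case: cc c0 cm => [//|[|k]] _ km; first by [].
      exact: (h1 (@Ordinal m k km)).
    by rewrite hK addr0 mulrN opprK mulrC natz.
  case=> x ->; apply: injective_projections => /=.
    by apply/matrixP => i k; rewrite !mxE L_formula !ffunE subrr.
  rewrite L_formula ffunE intrN intrM natz -pmulrn (@pchar_Zp p) //.
  by have Z0 : forall r : 'Z_p, - (0 * r) = 0 by move=> r; rewrite mul0r oppr0.

Qed.

End Grp.

Unset Implicit Arguments.

Theorem proposition5p4 (p : nat) (pp : prime p) (podd : odd p) :
  BF_iso (Yplus p) ('rV[int]_((p - 3)./2) * 'Z_p)%type.
Proof.
move: pp podd; case: p => [|[|[|q]]] // pp podd.
have ev : ~~ odd q by move: podd => /=; rewrite !negbK.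
exact: (@main_q q pp ev).
Qed.
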